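(* Let $\xi=(\xi_+,\xi_-)\in\mathcal{P}^2$ be minimal and let $n\in\mathbb{Z}\setminus\{0\}$. Then there exists a CSCA $\mathbf{a}$ with $\mathbf{a}\xi=u^n\xi$ (i.e. $\xi$ is a glider with eigenvalue $u^n$ for some CSCA) if and only if $\xi\wedge\bar\xi$ divides $u^{-n}+u^{n}$ in $\mathcal{P}$.
   Context: $\mathcal{P}$ denotes the ring of Laurent polynomials in $u$ over $\mathbb{Z}_2$; $\bar p(u)=p(u^{-1})$, applied entrywise to vectors. $\mathcal{R}$ is the subring of palindromes ($\bar p=p$). A CSCA is a $2\times2$ matrix with entries in $\mathcal{R}$ and determinant $1$. A vector $\xi\in\mathcal{P}^2$ is minimal if $\xi_+$ and $\xi_-$ have no common non-invertible divisor in $\mathcal{P}$ (the invertible elements of $\mathcal{P}$ are the monomials). The wedge product is $\xi\wedge\eta=\xi_+\eta_-+\eta_+\xi_-$. *)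

(* Defs.v *)
From HB Require Import structures.
From mathcomp Require Import all_boot all_order all_algebra.
From mathcomp Require Import generic_quotient fraction.
Set Implicit Arguments. Unset Strict Implicit. Unset Printing Implicit Defensive.
Import GRing.Theory.
Local Open Scope ring_scope.
Local Open Scope quotient_scope.

(** Coefficient field Z_2 and the field of rational functions in u over Z_2,
    inside which the ring P of Laurent polynomials lives. *)
Definition F2 : fieldType := 'F_2.
Definition K : fieldType := {fraction {poly F2}}.

Definition u : K := tofrac 'X.

(** P : Laurent polynomials in u over Z_2, i.e. the elements p(u) u^(-k) *)
Definition inP (x : K) : Prop :=
  exists (p : {poly F2}) (k : nat), x = tofrac p / u ^+ k.

(** the involution bar : p(u) |-> p(u^-1), extended to rational functions
    (num(u)/den(u) |-> num(u^-1)/den(u^-1)). *)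
Definition cst (c : F2) : K := tofrac (c%:P).
Definition bar (x : K) : K :=
  let r := repr x in
  (map_poly cst (frac r).1).[u^-1] / (map_poly cst (frac r).2).[u^-1].

Definition inR (x : K) : Prop := inP x /\ bar x = x.

Definition dvdP (a b : K) : Prop := exists c, inP c /\ b = a * c.
Definition unitP (a : K) : Prop := exists c, inP c /\ a * c = 1.

(** vectors of P^2 are column vectors xi with xi_+ = xi 0 0, xi_- = xi 1 0 *)
Definition inP2 (xi : 'cV[K]_2) : Prop := inP (xi 0 0) /\ inP (xi 1 0).

Definition vbar (xi : 'cV[K]_2) : 'cV[K]_2 := map_mx bar xi.

Definition wedge (xi eta : 'cV[K]_2) : K := xi 0 0 * eta 1 0 + eta 0 0 * xi 1 0.

Definition minimal (xi : 'cV[K]_2) : Prop :=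
  forall d, inP d -> dvdP d (xi 0 0) -> dvdP d (xi 1 0) -> unitP d.

Definition CSCA (A : 'M[K]_2) : Prop := (forall i j, inR (A i j)) /\ \det A = 1.

(* Main.v *)
Require Import Defs.
From HB Require Import structures.
From mathcomp Require Import all_boot all_order all_algebra.
From mathcomp Require Import generic_quotient fraction.
From mathcomp Require Import ring.
Import GRing.Theory.
Local Open Scope ring_scope.

Section Q_t1.
Local Open Scope quotient_scope.


Lemma repr_frac_gen (R : idomainType) (x : {fraction R}) :
  x = tofrac (\n_(repr x)) / tofrac (\d_(repr x)).
Proof.
have hd : tofrac (\d_(repr x)) != 0 :> {fraction R}.
  rewrite tofrac_eq0; exact: denom_ratioP.
apply: (mulIf hd); rewrite divfK //.
rewrite -{1}[x]reprK.
set r := repr x.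
unlock tofrac.
have mE : forall a b : {fraction R}, a * b = FracField.mul a b by [].
rewrite mE -FracField.pi_mul.
apply/eqmodP; rewrite /= FracField.equivfE /FracField.mulf /=.
rewrite !numden_Ratio ?oner_neq0 //=.
- by rewrite !mulr1 mulrC.
all: by rewrite mulr1; apply: denom_ratioP.
Qed.

Lemma repr_fracK (x : K) :
  x = tofrac (\n_(repr x)) / tofrac (\d_(repr x)) /\ \d_(repr x) != 0.
Proof. split; [exact: (@repr_frac_gen _ x) | exact: denom_ratioP]. Qed.

End Q_t1.

Lemma det2 (R : comRingType) (A : 'M[R]_2) : \det A = A 0 0 * A 1 1 - A 0 1 * A 1 0.
Proof.
rewrite (expand_det_row _ 0) !big_ord_recl big_ord0 /cofactor !det_mx11 !mxE /=.
have l1 : lift ord0 (ord0 : 'I_1) = 1 :> 'I_2 by apply: val_inj.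
have l2 : lift (0 : 'I_2) (0 : 'I_1) = 1 :> 'I_2 by apply: val_inj.
have l3 : lift (1 : 'I_2) (0 : 'I_1) = 0 :> 'I_2 by apply: val_inj.
have l4 : lift ord0 (0 : 'I_1) = 1 :> 'I_2 by apply: val_inj.
rewrite ?l1 ?l2 ?l3 ?l4 /bump /= expr0 expr1 mul1r mulN1r mulrN addr0.
by [].
Qed.
Lemma mul2 (R : comRingType) (A : 'M[R]_2) (x : 'cV[R]_2) i : (A *m x) i 0 = A i 0 * x 0 0 + A i 1 * x 1 0.
Proof.
rewrite mxE !big_ord_recl big_ord0 /=.
have l1 : lift ord0 (ord0 : 'I_1) = 1 :> 'I_2 by apply: val_inj.
by rewrite l1 addr0.
Qed.
Lemma ord2P (P : 'I_2 -> Prop) : P 0 -> P 1 -> forall i, P i.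
Proof.
move=> h0 h1 [[|[|k]] hk].
- by have -> : Ordinal hk = 0 by apply: val_inj.
- by have -> : Ordinal hk = 1 by apply: val_inj.
- by [].
Qed.

Section Q_t2.
Local Open Scope quotient_scope.


Lemma cst_is_zmod : zmod_morphism cst.
Proof. by move=> a b; rewrite /cst polyCB rmorphB. Qed.
HB.instance Definition _ := GRing.isZmodMorphism.Build F2 K cst cst_is_zmod.
Lemma cst_is_monoid : monoid_morphism cst.
Proof. split=> [|a b]; rewrite /cst; first by rewrite tofrac1. by rewrite polyCM tofracM. Qed.
HB.instance Definition _ := GRing.isMonoidMorphism.Build F2 K cst cst_is_monoid.

Definition ev (p : {poly F2}) : K := (map_poly cst p).[u^-1].

Lemma evD p q : ev (p + q) = ev p + ev q.
Proof. by rewrite /ev rmorphD hornerD. Qed.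
Lemma evM p q : ev (p * q) = ev p * ev q.
Proof. by rewrite /ev rmorphM hornerM. Qed.
Lemma ev1 : ev 1 = 1.
Proof. by rewrite /ev rmorph1 hornerC. Qed.
Lemma evC c : ev c%:P = cst c.
Proof. by rewrite /ev map_polyC hornerC. Qed.
Lemma evX : ev 'X = u^-1.
Proof. by rewrite /ev map_polyX hornerX. Qed.
Lemma evMXC p c : ev (p * 'X + c%:P) = ev p * u^-1 + cst c.
Proof. by rewrite evD evM evX evC. Qed.

Lemma u_neq0 : u != 0.
Proof. by rewrite /u tofrac_eq0 polyX_eq0. Qed.

Lemma ev_nz p : p != 0 -> ev p != 0.
Proof.
suff: p != 0 -> exists (q : {poly F2}) k, q`_0 != 0 /\ ev p * u ^+ k = tofrac q.
  move=> H /H [q [k [hq he]]]; apply/eqP => h0.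
  move: he; rewrite h0 mul0r => /esym/eqP; rewrite tofrac_eq0 => /eqP q0.
  by move: hq; rewrite q0 coef0 eqxx.
elim/poly_ind: p => [|p c IH]; first by rewrite eqxx.
move=> hp; have [p0|pn0] := eqVneq p 0.
  move: hp; rewrite p0 mul0r add0r => hc.
  exists c%:P, 0%N; split; first by rewrite coefC /= -polyC_eq0.
  by rewrite evC expr0 mulr1.
have [q [k [hq he]]] := IH pn0.
exists (q + c%:P * 'X^(k.+1)), k.+1; split.
  rewrite coefD coefCM coefXn /= mulr0 addr0 //.
rewrite evMXC tofracD tofracM tofracXn -he exprS.
by rewrite mulrDl mulrA divfK ?u_neq0.
Qed.

End Q_t2.

Section Q_t3.
Local Open Scope quotient_scope.


Lemma bar_repr (x : K) : exists (n d : {poly F2}),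
  [/\ d != 0, x = tofrac n / tofrac d & bar x = ev n / ev d].
Proof.
exists (\n_(repr x)), (\d_(repr x)); split.
- exact: denom_ratioP.
- exact: (@repr_frac_gen _ x).
- by [].
Qed.

Lemma barE (n d : {poly F2}) : d != 0 -> bar (tofrac n / tofrac d) = ev n / ev d.
Proof.
move=> hd.
have [n' [d' [hd' hx ->]]] := bar_repr (tofrac n / tofrac d).
have tdn : tofrac d != 0 :> K by rewrite tofrac_eq0.
have tdn' : tofrac d' != 0 :> K by rewrite tofrac_eq0.
have e : n * d' = n' * d.
  apply/eqP; rewrite -tofrac_eq !tofracM; apply/eqP.
  have := congr1 (fun z => z * tofrac d * tofrac d') hx.
  rewrite /= (divfK tdn) => ->.
  by rewrite (mulrAC _ (tofrac d)) (divfK tdn').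
have ed := @ev_nz d hd. have ed' := @ev_nz d' hd'.
apply: (mulIf ed); apply: (mulIf ed').
rewrite (divfK ed) (mulrAC _ (ev d)) (divfK ed') -!evM e.
by [].
Qed.

End Q_t3.

Lemma tfnz (d : {poly F2}) : d != 0 -> tofrac d != 0 :> K.
Proof. by move=> hd; rewrite tofrac_eq0. Qed.

Arguments tfnz {d}.
Arguments ev_nz {p}.
Lemma ev0 : ev 0 = 0.
Proof. by rewrite /ev rmorph0 horner0. Qed.
Lemma evN p : ev (- p) = - ev p.
Proof. by apply/eqP; rewrite -subr_eq0 opprK -evD addNr ev0. Qed.

Lemma barD x y : bar (x + y) = bar x + bar y.
Proof.
have [n1 [d1 [h1 -> ->]]] := bar_repr x.
have [n2 [d2 [h2 -> ->]]] := bar_repr y.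
rewrite (addf_div _ _ (tfnz h1) (tfnz h2)) -!tofracM -tofracD.
rewrite (barE _ _ (mulf_neq0 h1 h2)) evD !evM.
by rewrite (addf_div _ _ (ev_nz h1) (ev_nz h2)).
Qed.

Lemma barM x y : bar (x * y) = bar x * bar y.
Proof.
have [n1 [d1 [h1 -> ->]]] := bar_repr x.
have [n2 [d2 [h2 -> ->]]] := bar_repr y.
rewrite (mulf_div (tofrac n1)) -!tofracM.
by rewrite (barE _ _ (mulf_neq0 h1 h2)) !evM mulf_div.
Qed.

Lemma bar1 : bar 1 = 1.
Proof.
have e : (1 : K) = tofrac 1 / tofrac 1 by rewrite tofrac1 divr1.
by rewrite e (barE _ _ (oner_neq0 _)) ev1 divr1.
Qed.

Lemma bar0 : bar 0 = 0.
Proof.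
have h := barD 0 0; rewrite addr0 in h.
by apply: (addrI (bar 0)); rewrite addr0 -h.
Qed.

Lemma barN x : bar (- x) = - bar x.
Proof. by apply/eqP; rewrite -subr_eq0 opprK -barD addNr bar0. Qed.

Lemma bar_is_zmod : zmod_morphism bar.
Proof. by move=> x y; rewrite barD barN. Qed.
HB.instance Definition _ := GRing.isZmodMorphism.Build K K bar bar_is_zmod.
Lemma bar_is_monoid : monoid_morphism bar.
Proof. by split; [exact: bar1 | exact: barM]. Qed.
HB.instance Definition _ := GRing.isMonoidMorphism.Build K K bar bar_is_monoid.

Lemma barV x : bar x^-1 = (bar x)^-1.
Proof. exact: fmorphV. Qed.

Lemma bar_tofrac p : bar (tofrac p) = ev p.
Proof.
have e : tofrac p = tofrac p / tofrac 1 :> K by rewrite tofrac1 divr1.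
by rewrite e (barE _ _ (oner_neq0 _)) ev1 divr1.
Qed.

Lemma bar_u : bar u = u^-1.
Proof. by rewrite /u bar_tofrac evX. Qed.

Lemma bar_cst c : bar (cst c) = cst c.
Proof. by rewrite /cst bar_tofrac evC. Qed.

Lemma bar_ev p : bar (ev p) = tofrac p.
Proof.
elim/poly_ind: p => [|p c IH]; first by rewrite ev0 rmorph0 tofrac0.
rewrite evMXC barD barM IH barV bar_u invrK bar_cst.
by rewrite tofracD tofracM.
Qed.

Lemma bar_bar x : bar (bar x) = x.
Proof.
have [n [d [h -> ->]]] := bar_repr x.
by rewrite barM barV !bar_ev.
Qed.

Lemma ukn0 k : u ^+ k != 0.
Proof. exact: (expf_neq0 _ u_neq0). Qed.

Lemma tofracX k : tofrac ('X^k : {poly F2}) = u ^+ k :> K.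
Proof. by rewrite tofracXn. Qed.

Lemma inP_tofrac p : inP (tofrac p).
Proof. by exists p, 0%N; rewrite expr0 divr1. Qed.

Lemma inP0 : inP 0.
Proof. by rewrite -tofrac0; apply: inP_tofrac. Qed.
Lemma inP1 : inP 1.
Proof. by rewrite -tofrac1; apply: inP_tofrac. Qed.

Lemma inPD x y : inP x -> inP y -> inP (x + y).
Proof.
move=> [p [k ->]] [q [m ->]].
exists (p * 'X^m + q * 'X^k), (k + m)%N.
rewrite (addf_div _ _ (ukn0 k) (ukn0 m)) exprD.
by rewrite tofracD !tofracM !tofracX.
Qed.

Lemma inPM x y : inP x -> inP y -> inP (x * y).
Proof.
move=> [p [k ->]] [q [m ->]].
exists (p * q), (k + m)%N.
by rewrite mulf_div exprD tofracM.
Qed.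

Lemma inPN x : inP x -> inP (- x).
Proof.
move=> [p [k ->]]; exists (- p), k.
by rewrite tofracN mulNr.
Qed.

Lemma inP_uV : inP u^-1.
Proof. by exists 1, 1%N; rewrite tofrac1 expr1 div1r. Qed.

Lemma inP_u : inP u.
Proof. exact: inP_tofrac. Qed.

Lemma inP_uX k : inP (u ^+ k).
Proof. by rewrite -tofracX; apply: inP_tofrac. Qed.

Lemma inP_cst c : inP (cst c).
Proof. exact: inP_tofrac. Qed.

Lemma inP_ev p : inP (ev p).
Proof.
elim/poly_ind: p => [|p c IH]; first by rewrite ev0; apply: inP0.
rewrite evMXC; apply: inPD; last exact: inP_cst.
by apply: inPM => //; apply: inP_uV.
Qed.

Lemma bar_uX k : bar (u ^+ k) = (u^-1) ^+ k.
Proof. by rewrite -bar_u; exact: rmorphXn. Qed.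

Lemma inP_bar x : inP x -> inP (bar x).
Proof.
move=> [p [k ->]].
rewrite barM barV bar_tofrac bar_uX exprVn invrK.
by apply: inPM; [apply: inP_ev | apply: inP_uX].
Qed.

Lemma inP_uz (n : int) : inP (u ^ n).
Proof.
case: n => k; first exact: inP_uX.
by exists 1, k.+1; rewrite tofrac1 div1r.
Qed.

Lemma F2_2 : (1 + 1 : F2) = 0.
Proof. by apply/eqP. Qed.

Lemma K2 : (1 + 1 : K) = 0.
Proof. by rewrite -(rmorph1 cst) -rmorphD F2_2 rmorph0. Qed.

Lemma addxx (x : K) : x + x = 0.
Proof. by rewrite -[x]mulr1 -mulrDr K2 mulr0. Qed.

Lemma oppK2 (x : K) : - x = x.
Proof. by apply/eqP; rewrite -subr_eq0 -opprD addxx oppr0. Qed.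

Lemma bar_uz (n : int) : bar (u ^ n) = u ^ (- n).
Proof.
rewrite -exprz_inv -bar_u.
case: n => k; first exact: rmorphXn.
by rewrite /= barV; congr (_ ^-1); exact: rmorphXn.
Qed.

Lemma uz_inv (n : int) : u ^ n * u ^ (- n) = 1.
Proof. by rewrite -expfzDr ?u_neq0 // subrr. Qed.

Lemma uX_neq1 k : (0 < k)%N -> u ^+ k != 1.
Proof.
move=> hk; rewrite -tofracX -tofrac1 tofrac_eq.
apply/eqP => /(congr1 (fun p : {poly F2} => size p)).
by rewrite size_polyXn size_poly1; case: k hk.
Qed.

Lemma lam_sum_nz (n : int) : n != 0 -> u ^ (- n) + u ^ n != 0.
Proof.
move=> hn; apply/eqP => h.
have e : u ^ n = u ^ (- n) by move/eqP: h; rewrite addr_eq0 oppK2 => /eqP ->.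
have : u ^ n * u ^ n = 1 by rewrite {2}e uz_inv.
rewrite -expfzDr ?u_neq0 //.
case: n hn {h e} => k hk.
- rewrite -PoszD /= => /eqP; apply/negP; apply: uX_neq1.
  by case: k hk.
- rewrite /= => /(congr1 (fun z => z^-1)); rewrite invrK invr1 => /eqP.
  by apply/negP; apply: uX_neq1.
Qed.

Lemma cancel_u (z t : K) k : u ^+ k * (t / u ^+ k) * z = t * z.
Proof. by rewrite [u ^+ k * _]mulrC (divfK (ukn0 k)). Qed.

Lemma bezoutP (a b : K) : inP a -> inP b ->
  (forall d, inP d -> dvdP d a -> dvdP d b -> unitP d) ->
  exists x y, [/\ inP x, inP y & x * a + y * b = 1].
Proof.
move=> [pa [ka ea]] [pb [kb eb]] hmin.
set g := gcdp pa pb.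
have [c [hc hgc]] : unitP (tofrac g).
  apply: hmin; first exact: inP_tofrac.
  - exists (tofrac (pa %/ g) / u^+ka); split; first by exists (pa %/ g), ka.
    by rewrite ea mulrA -tofracM [g * _]mulrC (divpK (dvdp_gcdl pa pb)).
  - exists (tofrac (pb %/ g) / u^+kb); split; first by exists (pb %/ g), kb.
    by rewrite eb mulrA -tofracM [g * _]mulrC (divpK (dvdp_gcdr pa pb)).
have [[e1 e2] /= he] := Bezoutp pa pb.
case/eqpP: he => [[c1 c2] /= /andP [h1 h2] hE].
have hK : cst c1 * (tofrac e1 * tofrac pa + tofrac e2 * tofrac pb) = cst c2 * tofrac g.
  by rewrite /cst -!tofracM -tofracD -!tofracM !mul_polyC hE.
have hc2 : cst c2 != 0 by rewrite fmorph_eq0.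
set k1 := cst c1 / cst c2.
exists (k1 * c * tofrac e1 * u ^+ ka), (k1 * c * tofrac e2 * u ^+ kb); split.
- apply: inPM; last exact: inP_uX.
  apply: inPM; last exact: inP_tofrac.
  apply: inPM => //; rewrite /k1 -fmorph_div; exact: inP_cst.
- apply: inPM; last exact: inP_uX.
  apply: inPM; last exact: inP_tofrac.
  apply: inPM => //; rewrite /k1 -fmorph_div; exact: inP_cst.
rewrite ea eb.
have -> : k1 * c * tofrac e1 * u ^+ ka * (tofrac pa / u ^+ ka) =
   u ^+ ka * (tofrac pa / u ^+ ka) * (k1 * c * tofrac e1) by ring.
have -> : k1 * c * tofrac e2 * u ^+ kb * (tofrac pb / u ^+ kb) =
   u ^+ kb * (tofrac pb / u ^+ kb) * (k1 * c * tofrac e2) by ring.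
rewrite !cancel_u.
have -> : tofrac pa * (k1 * c * tofrac e1) + tofrac pb * (k1 * c * tofrac e2) =
   (cst c1 * (tofrac e1 * tofrac pa + tofrac e2 * tofrac pb)) / cst c2 * c.
  by rewrite /k1; ring.
by rewrite hK [cst c2 * _]mulrC (mulfK hc2) hgc.
Qed.

Section G.
Variable R : comRingType.
Implicit Types a b c d p q r s l m : R.

Lemma L_q (a b a' b' p q l l' : R) : p*a + q*b = l*a -> p*a' + q*b' = l'*a' ->
  (a*b'+a'*b)*q = (l'+l)*(a*a') - (p*(a*a') + p*(a*a')).
Proof.
move=> E1 E1'.
have e1 : q*b = l*a - p*a by rewrite -E1; ring.
have e1' : q*b' = l'*a' - p*a' by rewrite -E1'; ring.
have -> : (a*b'+a'*b)*q = a*(q*b') + a'*(q*b) by ring.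
rewrite e1 e1'; ring.
Qed.

Lemma L_r (a b a' b' r s l l' : R) : r*a + s*b = l*b -> r*a' + s*b' = l'*b' ->
  (a*b'+a'*b)*r = (l'+l)*(b*b') - (s*(b*b') + s*(b*b')).
Proof.
move=> E1 E1'.
have e1 : r*a = l*b - s*b by rewrite -E1; ring.
have e1' : r*a' = l'*b' - s*b' by rewrite -E1'; ring.
have -> : (a*b'+a'*b)*r = b'*(r*a) + b*(r*a') by ring.
rewrite e1 e1'; ring.
Qed.

Lemma L_p (a b a' b' p q l l' : R) : p*a + q*b = l*a -> p*a' + q*b' = l'*a' ->
  (a*b'+a'*b)*(p+l') = (l'+l)*(a*b') + ((l'*(a'*b) - q*(b*b')) + (l'*(a'*b) - q*(b*b'))).
Proof.
move=> E1 E1'.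
have e1 : p*a = l*a - q*b by rewrite -E1; ring.
have e1' : p*a' = l'*a' - q*b' by rewrite -E1'; ring.
have -> : (a*b'+a'*b)*(p+l') = b'*(p*a) + b*(p*a') + l'*(a*b'+a'*b) by ring.
rewrite e1 e1'; ring.
Qed.

Lemma L_s (a b a' b' r s l l' : R) : r*a + s*b = l*b -> r*a' + s*b' = l'*b' ->
  (a*b'+a'*b)*(s+l') = (l'+l)*(a'*b) + ((l'*(a*b') - r*(a*a')) + (l'*(a*b') - r*(a*a'))).
Proof.
move=> E1 E1'.
have e1 : s*b = l*b - r*a by rewrite -E1; ring.
have e1' : s*b' = l'*b' - r*a' by rewrite -E1'; ring.
have -> : (a*b'+a'*b)*(s+l') = a*(s*b') + a'*(s*b) + l'*(a*b'+a'*b) by ring.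
rewrite e1 e1'; ring.
Qed.
End G.

Section G2.
Variable R : comRingType.
Lemma L_pal (l l' c x y : R) : l' + l = (x + y) * c ->
  l + c * y = l' + c * x + ((l - c * x) + (l - c * x)).
Proof.
move=> h. have e : c * y = (l'+l) - c * x by rewrite h; ring.
rewrite e; ring.
Qed.
Lemma L_det (a b a' b' c l l' : R) : l'+l = (a * b' + a' * b) * c -> l' * l = 1 ->
  (l' + c * (a * b')) * (l' + c * (a' * b)) - (c * (a * a')) * (c * (b * b')) = 1 + (l' * l' + l' * l').
Proof.
move=> h hl.
have -> : (l' + c * (a * b')) * (l' + c * (a' * b)) - (c * (a * a')) * (c * (b * b')) =
  l' * l' + l' * ((a * b' + a' * b) * c) by ring.
rewrite -h mulrDr hl; ring.
Qed.
Lemma L_row0 (a b a' b' c l l' : R) : l'+l = (a * b' + a' * b) * c ->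
  (l' + c * (a * b')) * a + c * (a * a') * b = l * a + (l' * a + l' * a).
Proof.
move=> h.
have -> : (l' + c * (a * b')) * a + c * (a * a') * b = l' * a + a * ((a * b' + a' * b) * c) by ring.
rewrite -h; ring.
Qed.
Lemma L_row1 (a b a' b' c l l' : R) : l'+l = (a * b' + a' * b) * c ->
  c * (b * b') * a + (l' + c * (a' * b)) * b = l * b + (l' * b + l' * b).
Proof.
move=> h.
have -> : c * (b * b') * a + (l' + c * (a' * b)) * b = l' * b + b * ((a * b' + a' * b) * c) by ring.
rewrite -h; ring.
Qed.
End G2.

Lemma sub_dbl (x y : K) : x - (y + y) = x.
Proof. by rewrite addxx subr0. Qed.
Lemma add_dbl (x y : K) : x + (y + y) = x.
Proof. by rewrite addxx addr0. Qed.

Lemma bar_eq0 x : bar x = 0 -> x = 0.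
Proof. by move=> h; rewrite -[x]bar_bar h bar0. Qed.

Lemma not_min0 (xi : 'cV[K]_2) : minimal xi -> xi 0 0 = 0 -> xi 1 0 = 0 -> False.
Proof.
move=> hmin h0 h1.
have d0 : dvdP 0 0 by exists 0; split; [exact: inP0 | rewrite mul0r].
have [c [_ hc]] := hmin 0 inP0 (ltac:(rewrite h0; exact: d0)) (ltac:(rewrite h1; exact: d0)).
by move: hc; rewrite mul0r => /eqP; rewrite eq_sym oner_eq0.
Qed.

Lemma forward (xi : 'cV[K]_2) (n : int) :
  inP2 xi -> minimal xi -> n != 0 ->
  (exists A : 'M[K]_2, CSCA A /\ A *m xi = u ^ n *: xi) ->
  dvdP (wedge xi (vbar xi)) (u ^ (- n) + u ^ n).
Proof.
move=> [aP bP] hmin hn [A [[hR hdet] hA]].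
have wE : wedge xi (vbar xi) = xi 0 0 * bar (xi 1 0) + bar (xi 0 0) * xi 1 0
  by rewrite /wedge /vbar !mxE.
rewrite wE.
have E1 : A 0 0 * xi 0 0 + A 0 1 * xi 1 0 = u ^ n * xi 0 0.
  by have := congr1 (fun M : 'M[K]_(2,1) => M 0 0) hA; rewrite /= mul2 mxE.
have E2 : A 1 0 * xi 0 0 + A 1 1 * xi 1 0 = u ^ n * xi 1 0.
  by have := congr1 (fun M : 'M[K]_(2,1) => M 1 0) hA; rewrite /= mul2 mxE.
have hp i j : bar (A i j) = A i j by case: (hR i j).
have E1' := congr1 bar E1; rewrite barD !barM !hp bar_uz in E1'.
have E2' := congr1 bar E2; rewrite barD !barM !hp bar_uz in E2'.
have Hq := @L_q K _ _ _ _ _ _ _ _ E1 E1'; have Hr := @L_r K _ _ _ _ _ _ _ _ E2 E2'.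
have Hp := @L_p K _ _ _ _ _ _ _ _ E1 E1'; have Hs := @L_s K _ _ _ _ _ _ _ _ E2 E2'.
rewrite sub_dbl in Hq; rewrite sub_dbl in Hr.
rewrite add_dbl in Hp; rewrite add_dbl in Hs.
move: Hq Hr Hp Hs E1 E2 E1' E2' hmin aP bP.
set a := xi 0 0; set b := xi 1 0; set w := a * bar b + bar a * b.
set S := u ^ (- n) + u ^ n.
set p := A 0 0; set q := A 0 1; set r := A 1 0; set s := A 1 1.
move=> Hq Hr Hp Hs E1 E2 E1' E2' hmin aP bP.
have hS : S != 0 := lam_sum_nz n hn.
have hw : w != 0.
  apply/eqP => w0.
  rewrite w0 mul0r in Hq; rewrite w0 mul0r in Hr.
  have aa : a * bar a = 0.
    by move/eqP: Hq; rewrite eq_sym mulf_eq0 (negbTE hS) /= => /eqP.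
  have bb : b * bar b = 0.
    by move/eqP: Hr; rewrite eq_sym mulf_eq0 (negbTE hS) /= => /eqP.
  have a0 : a = 0 by move/eqP: aa; rewrite mulf_eq0 => /orP [/eqP //| /eqP /bar_eq0].
  have b0 : b = 0 by move/eqP: bb; rewrite mulf_eq0 => /orP [/eqP //| /eqP /bar_eq0].
  exact: (not_min0 xi hmin a0 b0).
set c := S / w.
have cw : w * c = S by rewrite /c mulrC (divfK hw).
have Hq' : q = c * (a * bar a) by apply: (mulfI hw); rewrite Hq [RHS]mulrA cw.
have Hr' : r = c * (b * bar b) by apply: (mulfI hw); rewrite Hr [RHS]mulrA cw.
have Hp' : p + u ^ (- n) = c * (a * bar b) by apply: (mulfI hw); rewrite Hp [RHS]mulrA cw.
have Hs' : s + u ^ (- n) = c * (bar a * b) by apply: (mulfI hw); rewrite Hs [RHS]mulrA cw.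
have [x [y [xP yP hxy]]] := bezoutP a b aP bP hmin.
have hxy' : bar x * bar a + bar y * bar b = 1.
  by have := congr1 bar hxy; rewrite barD !barM bar1.
have inA i j : inP (A i j) by case: (hR i j).
have cb : inP (c * bar b).
  have -> : c * bar b = x * (c * (a * bar b)) + y * (c * (b * bar b)).
    by rewrite -{1}[c * bar b]mulr1 -hxy; ring.
  rewrite -Hp' -Hr'; apply: inPD; apply: inPM => //.
  - by apply: inPD; [exact: inA | exact: inP_uz].
  - exact: inA.
have ca : inP (c * bar a).
  have -> : c * bar a = x * (c * (a * bar a)) + y * (c * (bar a * b)).
    by rewrite -{1}[c * bar a]mulr1 -hxy; ring.
  rewrite -Hq' -Hs'; apply: inPD; apply: inPM => //.
  - exact: inA.
  - by apply: inPD; [exact: inA | exact: inP_uz].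
exists c; split; last by rewrite cw.
have -> : c = bar x * (c * bar a) + bar y * (c * bar b).
  by rewrite -{1}[c]mulr1 -hxy'; ring.
by apply: inPD; apply: inPM => //; apply: inP_bar.
Qed.

Lemma backward (xi : 'cV[K]_2) (n : int) :
  inP2 xi -> n != 0 ->
  dvdP (wedge xi (vbar xi)) (u ^ (- n) + u ^ n) ->
  (exists A : 'M[K]_2, CSCA A /\ A *m xi = u ^ n *: xi).
Proof.
move=> [aP bP] hn [c [cP hS]].
have wE : wedge xi (vbar xi) = xi 0 0 * bar (xi 1 0) + bar (xi 0 0) * xi 1 0
  by rewrite /wedge /vbar !mxE.
rewrite wE in hS.
have hl : u ^ (- n) * u ^ n = 1 by rewrite mulrC uz_inv.
have hSn := lam_sum_nz n hn.
move: hS aP bP hl hSn.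
set a := xi 0 0; set b := xi 1 0.
set l := u ^ n; set l' := u ^ (- n).
move=> hS aP bP hl hSn.
have hw : a * bar b + bar a * b != 0.
  by apply/eqP => w0; move: hSn; rewrite hS w0 mul0r eqxx.
have bS : bar (l' + l) = l' + l by rewrite barD /l /l' !bar_uz opprK addrC.
have bw : bar (a * bar b + bar a * b) = a * bar b + bar a * b.
  by rewrite barD (barM a) (barM (bar a)) !bar_bar addrC.
have bc : bar c = c.
  apply: (mulfI hw); rewrite -hS -{1}bw -barM -hS; exact: bS.
have hS' : l' + l = (bar a * b + a * bar b) * c by rewrite hS addrC.
pose P := l' + c * (a * bar b).
pose Q := c * (a * bar a).
pose Rr := c * (b * bar b).
pose Ss := l' + c * (bar a * b).
pose A : 'M[K]_2 := \matrix_(i, j) (if i == 0 then (if j == 0 then P else Q)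
                                    else (if j == 0 then Rr else Ss)).
have A00 : A 0 0 = P by rewrite mxE.
have A01 : A 0 1 = Q by rewrite mxE.
have A10 : A 1 0 = Rr by rewrite mxE.
have A11 : A 1 1 = Ss by rewrite mxE.
have blp : bar l' = l by rewrite /l' bar_uz opprK.
have inl' : inP l' by apply: inP_uz.
exists A; split; first split.
- apply: ord2P; apply: ord2P; rewrite ?A00 ?A01 ?A10 ?A11; split.
  + by apply: inPD => //; apply: inPM => //; apply: inPM => //; apply: inP_bar.
  + rewrite /P barD (barM c) (barM a) blp bc bar_bar.
    by rewrite (@L_pal K _ _ _ _ _ hS) add_dbl.
  + by apply: inPM => //; apply: inPM => //; apply: inP_bar.
  + by rewrite /Q (barM c) (barM a) bc bar_bar [bar a * a]mulrC.
  + by apply: inPM => //; apply: inPM => //; apply: inP_bar.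
  + by rewrite /Rr (barM c) (barM b) bc bar_bar [bar b * b]mulrC.
  + by apply: inPD => //; apply: inPM => //; apply: inPM => //; apply: inP_bar.
  + rewrite /Ss barD (barM c) (barM (bar a)) blp bc bar_bar.
    by rewrite (@L_pal K _ _ _ _ _ hS') add_dbl.
- rewrite det2 A00 A01 A10 A11 /P /Q /Rr /Ss.
  by rewrite (@L_det K _ _ _ _ _ _ _ hS hl) add_dbl.
- apply/matrixP => i j; rewrite (ord1 j); move: i; apply: ord2P.
  + by rewrite mul2 A00 A01 mxE /P /Q (@L_row0 K _ _ _ _ _ _ _ hS) add_dbl.
  + by rewrite mul2 A10 A11 mxE /Rr /Ss (@L_row1 K _ _ _ _ _ _ _ hS) add_dbl.
Qed.


Theorem mainTheorem2 (xi : 'cV[K]_2) (n : int) :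
  inP2 xi -> minimal xi -> n != 0 ->
  (exists A : 'M[K]_2, CSCA A /\ A *m xi = u ^ n *: xi) <->
  dvdP (wedge xi (vbar xi)) (u ^ (- n) + u ^ n).
Proof.
move=> hP hmin hn; split.
- exact: forward.
- exact: backward.
Qed.
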